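(* Let $k$ be a positive integer and $p$ a prime. Then: (1) every integer of the form $p_1^{2p^k-1}$ with $p_1$ prime is $p^k$-$T_0T^\ast$-perfect; (2) if $k\ge 2$ and $p$ is odd, then every integer of the form $p_1^{(p^{a_1}-1)/2}\cdot p_2^{(p^{a_2}-1)/2}$, where $p_1\neq p_2$ are primes and $a_1,a_2$ are positive integers with $a_1+a_2=k$, is $p^k$-$T_0T^\ast$-perfect; (3) every integer $n>1$ that is $p^k$-$T_0T^\ast$-perfect is either of the form $p_1^{2p^k-1}$ with $p_1$ prime, or (with $p$ odd) of the form $p_1^{(p^{a_1}-1)/2}\cdot p_2^{(p^{a_2}-1)/2}$ with distinct primes $p_1,p_2$ and positive integers $a_1,a_2$ with $a_1+a_2=k$.
   Context: For a positive integer $m$, $T(m)$ denotes the product of all positive divisors of $m$, and $T^\ast(m)$ the product of all unitary divisors of $m$ (divisors $d$ with $\gcd(d,m/d)=1$). For an integer $K\ge 2$, an integer $n>1$ is called $K$-$T_0T^\ast$-perfect if $T(T^\ast(n))=n^K$. *)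

(* Defs.v *)
From mathcomp Require Import all_boot.

Definition Tdiv (m : nat) : nat := \prod_(d <- divisors m) d.

Definition Tunit (m : nat) : nat :=
  \prod_(d <- divisors m | coprime d (m %/ d)) d.

Definition KT0Tstar_perfect (K n : nat) : Prop :=
  2 <= K /\ 1 < n /\ Tdiv (Tunit n) = n ^ K.

(* Main.v *)
Require Import Defs.
From mathcomp Require Import all_boot.
From mathcomp Require Import zify.

Lemma pair_prod n (P : pred nat) : 0 < n ->
  (forall d, d %| n -> P d = P (n %/ d)) ->
  (\prod_(d <- divisors n | P d) d) ^ 2 = n ^ count P (divisors n).
Proof.
move=> n0 HP.
have Hdiv x : x %| n -> n %/ (n %/ x) = x.
  by move=> hx; rewrite divnA // mulKn.
have Hperm : perm_eq (map (fun d => n %/ d) (divisors n)) (divisors n).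
  apply: uniq_perm; last first.
  - move=> x /=; apply/idP/idP => [/mapP[y hy ->]|hx].
      by rewrite -dvdn_divisors //; apply: dvdn_div; rewrite dvdn_divisors.
    have hx' : x %| n by rewrite dvdn_divisors.
    apply/mapP; exists (n %/ x); last by rewrite Hdiv.
    by rewrite -dvdn_divisors //; apply: dvdn_div.
  - exact: divisors_uniq.
  - rewrite map_inj_in_uniq ?divisors_uniq // => x y.
    rewrite -!dvdn_divisors // => hx hy e.
    by rewrite -(Hdiv x hx) e Hdiv.
have E : \prod_(d <- divisors n | P d) d = \prod_(d <- divisors n | P d) (n %/ d).
  rewrite -{1}(perm_big _ Hperm) big_map /= big_seq_cond [RHS]big_seq_cond.
  apply: eq_bigl => d; case hd: (d \in divisors n) => //=.
  by rewrite -HP // dvdn_divisors.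
rewrite -mulnn {2}E -big_split /= big_seq_cond.
rewrite (eq_bigr (fun=> n)) => [|d /andP[hd _]]; last first.
  by rewrite mulnC divnK // dvdn_divisors.
rewrite -big_seq_cond big_const_seq iter_muln muln1.
congr (_ ^ _); apply: eq_in_count => d hd /=; by rewrite hd.
Qed.

Lemma divisorsM a b : coprime a b -> 0 < a -> 0 < b ->
  perm_eq (divisors (a * b)) [seq d1 * d2 | d1 <- divisors a, d2 <- divisors b].
Proof.
move=> cab a0 b0; have ab0 : 0 < a * b by rewrite muln_gt0 a0.
apply: uniq_perm; first exact: divisors_uniq.
  apply: allpairs_uniq; rewrite ?divisors_uniq //.
  move=> [x y] [x' y'] /allpairsP[[u v] /= [hu hv [-> ->]]].
  move=> /allpairsP[[u' v'] /= [hu' hv' [-> ->]]] /= e.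
  move: hu hv hu' hv'; rewrite -!dvdn_divisors // => hu hv hu' hv'.
  have Hx z w : z %| a -> w %| b -> gcdn a (z * w) = z.
    move=> hz hw; rewrite Gauss_gcdl; first by rewrite gcdnC; apply/gcdn_idPl.
    exact: coprime_dvdr hw cab.
  have eu : u = u' by rewrite -(Hx u v) // e Hx.
  subst u'; congr (_, _).
  have u0 : 0 < u by apply: dvdn_gt0 hu.
  by apply/eqP; rewrite -(eqn_pmul2l u0) e.
move=> d; rewrite -dvdn_divisors //; apply/idP/allpairsP => [hd|].
  set g := gcdn d a.
  have g0 : 0 < g by rewrite gcdn_gt0 a0 orbT.
  have [d' ed] : exists d', d = g * d'.
    by exists (d %/ g); rewrite mulnC divnK // dvdn_gcdl.
  have [a' ea] : exists a', a = g * a'.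
    by exists (a %/ g); rewrite mulnC divnK // dvdn_gcdr.
  have cda : coprime d' a'.
    have : g * gcdn d' a' = g by rewrite muln_gcdr -ed -ea.
    by rewrite /coprime -{2}(muln1 g) => /eqP; rewrite eqn_pmul2l.
  exists (g, d') => /=; split => //.
    by rewrite -dvdn_divisors // dvdn_gcdr.
  rewrite -dvdn_divisors //.
  move: hd; rewrite ed ea -mulnA dvdn_pmul2l // Gauss_dvdr //.
move=> [[x y] /= [hx hy ->]].
by move: hx hy; rewrite -!dvdn_divisors // => hx hy; apply: dvdn_mul.
Qed.


Lemma count_sum (T : Type) (P : pred T) s : count P s = \sum_(x <- s) (P x : nat).
Proof. by elim: s => [|x s IH]; rewrite ?big_nil ?big_cons //= IH. Qed.

Lemma countM a b (P : nat -> pred nat) : coprime a b -> 0 < a -> 0 < b ->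
  (forall d1 d2, d1 %| a -> d2 %| b -> P (a * b) (d1 * d2) = P a d1 && P b d2) ->
  count (P (a * b)) (divisors (a * b)) =
  count (P a) (divisors a) * count (P b) (divisors b).
Proof.
move=> cab a0 b0 HP.
rewrite (permP (divisorsM _ _ cab a0 b0)) !count_sum big_allpairs_dep /=.
rewrite big_distrl /= big_seq [RHS]big_seq; apply: eq_bigr => x hx.
rewrite big_distrr /= big_seq [RHS]big_seq /=; apply: eq_bigr => y hy.
rewrite HP ?dvdn_divisors //.
by case: (P a x); case: (P b y).
Qed.

Lemma mult_ind (f g : nat -> nat) : f 1 = g 1 ->
  (forall a b, coprime a b -> 0 < a -> 0 < b -> f (a * b) = f a * f b) ->
  (forall a b, coprime a b -> 0 < a -> 0 < b -> g (a * b) = g a * g b) ->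
  (forall q e, prime q -> 0 < e -> f (q ^ e) = g (q ^ e)) ->
  forall n, 0 < n -> f n = g n.
Proof.
move=> f1 fM gM fg n; elim/ltn_ind: n => n IH n0.
case: (leqP n 1) => [|lt1n]; first by case: n n0 {IH} => [|[]].
pose q := pdiv n; have q_pr : prime q by apply: pdiv_prime.
have lq0 : 0 < logn q n by rewrite lognE q_pr n0 pdiv_dvd.
have def_n : n = n`_q * n`_q^' by rewrite partnC.
have co : coprime n`_q n`_q^' by rewrite coprime_partC.
have lt : n`_q^' < n.
  by rewrite {2}def_n ltn_Pmull ?part_gt0 // p_part -(expn0 q) ltn_exp2l // prime_gt1.
rewrite def_n fM ?part_gt0 // gM ?part_gt0 // [f n`_q^']IH ?part_gt0 //.
by rewrite p_part fg.
Qed.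


Lemma primes_permM a b : coprime a b -> 0 < a -> 0 < b ->
  perm_eq (primes (a * b)) (primes a ++ primes b).
Proof.
move=> co_mn m_gt0 n_gt0.
apply: uniq_perm => [||p]; first exact: primes_uniq.
  by rewrite cat_uniq !primes_uniq -coprime_has_primes // co_mn.
by rewrite mem_cat primesM.
Qed.

Definition g1 n := 2 ^ size (primes n).
Definition g2 n := \prod_(q <- primes n) (logn q n).+1.
Definition Pu (n d : nat) := coprime d (n %/ d).
Definition f1 n := count (Pu n) (divisors n).
Definition Pt (n d : nat) := true.
Definition f2 n := count (Pt n) (divisors n).

Lemma g1M a b : coprime a b -> 0 < a -> 0 < b -> g1 (a * b) = g1 a * g1 b.
Proof.
move=> co a0 b0; rewrite /g1 (perm_size (primes_permM _ _ co a0 b0)) size_cat expnD //.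
Qed.

Lemma g2M a b : coprime a b -> 0 < a -> 0 < b -> g2 (a * b) = g2 a * g2 b.
Proof.
move=> co_mn m_gt0 n_gt0; rewrite /g2 (perm_big _ (primes_permM _ _ co_mn m_gt0 n_gt0)).
rewrite big_cat /= !big_seq.
congr (_ * _); apply: eq_bigr => p; rewrite mem_primes => /and3P[_ _ dvp].
  rewrite (mulnC a) logn_Gauss //; move: co_mn.
  by rewrite -(divnK dvp) coprimeMl => /andP[].
rewrite logn_Gauss //; move: co_mn.
by rewrite coprime_sym -(divnK dvp) coprimeMl => /andP[].
Qed.

Lemma f2M a b : coprime a b -> 0 < a -> 0 < b -> f2 (a * b) = f2 a * f2 b.
Proof. by move=> co a0 b0; rewrite /f2 (countM _ _ Pt). Qed.

Lemma f1M a b : coprime a b -> 0 < a -> 0 < b -> f1 (a * b) = f1 a * f1 b.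
Proof.
move=> co a0 b0; rewrite /f1 (countM _ _ Pu) // => d1 d2 h1 h2.
have [a' ea] := dvdnP h1; have [b' eb] := dvdnP h2.
have d10 : 0 < d1 by apply: dvdn_gt0 h1.
have d20 : 0 < d2 by apply: dvdn_gt0 h2.
have c1 : coprime d1 b'.
  apply: (coprime_dvdr (_ : b' %| b)); first by rewrite eb dvdn_mulr.
  exact: (coprime_dvdl h1 co).
have c2 : coprime d2 a'.
  apply: (coprime_dvdr (_ : a' %| a)); first by rewrite ea dvdn_mulr.
  by apply: (coprime_dvdl h2); rewrite coprime_sym.
rewrite /Pu ea eb !mulnK // mulnACA mulnK ?muln_gt0 ?d10 //.
rewrite coprimeMl !coprimeMr c1 c2 /=.
by rewrite andbT.
Qed.


Lemma divisorsX q e : prime q ->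
  perm_eq (divisors (q ^ e)) [seq q ^ i | i <- iota 0 e.+1].
Proof.
move=> qp; have q1 := prime_gt1 qp.
have qe0 : 0 < q ^ e by rewrite expn_gt0 ltnW.
apply: uniq_perm; first exact: divisors_uniq.
  by rewrite map_inj_uniq ?iota_uniq //; apply: expnI.
move=> d; rewrite -dvdn_divisors //; apply/idP/mapP.
  by move/(dvdn_pfactor _ _ qp) => [i hi ->]; exists i; rewrite // mem_iota.
by move=> [i]; rewrite mem_iota => /= hi ->; rewrite dvdn_exp2l.
Qed.

Lemma f1X q e : prime q -> 0 < e -> f1 (q ^ e) = g1 (q ^ e).
Proof.
move=> qp e0; have q1 := prime_gt1 qp.
rewrite /g1 primesX // primes_prime //= /f1 (permP (divisorsX _ e qp)) count_map.
rewrite (eq_in_count (a2 := fun i => (i == 0) || (i == e))); last first.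
  move=> i; rewrite mem_iota /= => hi. rewrite /preim /Pu /=.
  rewrite add0n ltnS in hi. rewrite -expnB; last exact: hi; last exact: ltnW. 
  case: i hi => [|i] hi; first by rewrite expn0 coprime1n.
  rewrite coprime_pexpl //.
  case: (ltngtP e i.+1) => [h|h|<-]; first by rewrite leqNgt h in hi.
    rewrite coprime_pexpr ?subn_gt0 // /coprime gcdnn.
    by case: q q1 {qp} => [|[]].
  by rewrite subnn expn0 coprimen1 orbT.
case: e e0 => // e _.
have -> : iota 0 e.+2 = 0 :: (iota 1 e ++ [:: e.+1]).
  by transitivity (0 :: iota 1 (e + 1)); [rewrite addn1 | rewrite iotaD].
rewrite /= count_cat /= eqxx.
rewrite (eq_in_count (a2 := pred0)) ?count_pred0 //.
move=> i; rewrite mem_iota => /andP[h1 h2] /=.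
rewrite add1n in h2; apply/negbTE; rewrite negb_or -lt0n h1 /= neq_ltn.
by rewrite h2.
Qed.

Lemma f2X q e : prime q -> 0 < e -> f2 (q ^ e) = g2 (q ^ e).
Proof.
move=> qp e0.
rewrite /g2 primesX // primes_prime // big_seq1 pfactorK //.
by rewrite /f2 (permP (divisorsX _ e qp)) count_map /Pt /preim /= count_predT size_iota.
Qed.

Lemma f1E n : 0 < n -> f1 n = g1 n.
Proof.
apply: mult_ind; [by [] | exact: f1M | exact: g1M | exact: f1X].
Qed.

Lemma f2E n : 0 < n -> f2 n = g2 n.
Proof.
apply: mult_ind; [by rewrite /f2 /g2 (_ : primes 1 = [::]) // big_nil | exact: f2M | exact: g2M | exact: f2X].
Qed.


Lemma L1 n : 0 < n -> Tunit n ^ 2 = n ^ g1 n.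
Proof.
move=> n0.
have HP : forall d, d %| n -> Pu n d = Pu n (n %/ d).
  by move=> d hd; rewrite /Pu divnA // mulKn // coprime_sym.
have H := pair_prod n (Pu n) n0 HP.
rewrite -/(f1 n) f1E // in H; exact: H.
Qed.

Lemma L2 n : 0 < n -> Tdiv n ^ 2 = n ^ g2 n.
Proof.
move=> n0.
have H := pair_prod n (Pt n) n0 (fun _ _ => erefl).
rewrite -/(f2 n) f2E // in H; exact: H.
Qed.

Lemma key n : 1 < n ->
  Tdiv (Tunit n) ^ 2 = n ^ (2 ^ (size (primes n)).-1 *
     \prod_(q <- primes n) (2 ^ (size (primes n)).-1 * logn q n).+1).
Proof.
move=> n1; set c := 2 ^ (size (primes n)).-1; have n0 : 0 < n by apply: ltnW.
have r0 : 0 < size (primes n).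
  have : pdiv n \in primes n by rewrite mem_primes pdiv_prime // n0 pdiv_dvd.
  by case: (primes n).
have c0 : 0 < c by rewrite expn_gt0.
have HT : Tunit n = n ^ c.
  apply: (@expIn 2) => //; rewrite L1 // /g1 -expnM.
  by congr (_ ^ _); rewrite /c -expnSr prednK.
rewrite HT L2 ?expn_gt0 ?n0 // /g2 primesX // -expnM.
congr (_ ^ (_ * _)); apply: eq_bigr => q _; by rewrite lognX.
Qed.

Lemma n_decomp n : 0 < n -> n = \prod_(q <- primes n) q ^ logn q n.
Proof. by move=> n0; rewrite {1}(prod_prime_decomp n0) prime_decompE big_map. Qed.

Lemma odd_half x : odd x -> (x - 1) %/ 2 * 2 + 1 = x.
Proof.
move=> hx; have h := odd_double_half x; rewrite hx in h.
rewrite -h /= addKn -muln2 mulnK // addnC //.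
Qed.


Lemma part1 k p (hk : 0 < k) (hp : prime p) p1 : prime p1 ->
  KT0Tstar_perfect (p ^ k) (p1 ^ (2 * p ^ k - 1)).
Proof.
move=> hp1.
have K2 : 2 <= p ^ k.
  apply: leq_trans (prime_gt1 hp) _; rewrite -{1}(expn1 p) leq_pexp2l // prime_gt0 //.
have E0 : 0 < 2 * p ^ k - 1 by lia.
have n1 : 1 < p1 ^ (2 * p ^ k - 1).
  by rewrite -(expn0 p1) ltn_exp2l // prime_gt1.
split => //; split => //.
have H := key _ n1.
rewrite primesX // primes_prime // big_seq1 /= expn0 !mul1n pfactorK // in H.
apply: (@expIn 2) => //; rewrite H -[RHS]expnM; congr (_ ^ _); lia.
Qed.

Lemma part2 k p (hk : 0 < k) (hp : prime p) : odd p ->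
   forall p1 p2 a1 a2 : nat, prime p1 -> prime p2 -> p1 != p2 ->
     0 < a1 -> 0 < a2 -> a1 + a2 = k ->
     KT0Tstar_perfect (p ^ k)
       (p1 ^ ((p ^ a1 - 1) %/ 2) * p2 ^ ((p ^ a2 - 1) %/ 2)).
Proof.
move=> op p1 p2 a1 a2 h1 h2 hne a10 a20 hk'.
have K2 : 2 <= p ^ k.
  apply: leq_trans (prime_gt1 hp) _; rewrite -{1}(expn1 p) leq_pexp2l // prime_gt0 //.
have p3 : 3 <= p.
  by move: (prime_gt1 hp) op; case: p {hp K2} => [|[|[|]]].
have oa1 : odd (p ^ a1) by rewrite oddX op orbT.
have oa2 : odd (p ^ a2) by rewrite oddX op orbT.
have ha1 := odd_half _ oa1; have ha2 := odd_half _ oa2.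
set e1 := (p ^ a1 - 1) %/ 2 in ha1 *; set e2 := (p ^ a2 - 1) %/ 2 in ha2 *.
have pa1 : p <= p ^ a1 by rewrite -{1}(expn1 p) leq_pexp2l // prime_gt0.
have pa2 : p <= p ^ a2 by rewrite -{1}(expn1 p) leq_pexp2l // prime_gt0.
have e10 : 0 < e1 by lia.
have e20 : 0 < e2 by lia.
have q10 : 0 < p1 ^ e1 by rewrite expn_gt0 prime_gt0.
have q20 : 0 < p2 ^ e2 by rewrite expn_gt0 prime_gt0.
have n1 : 1 < p1 ^ e1 * p2 ^ e2.
  have h : 1 < p1 ^ e1 by rewrite -(expn0 p1) ltn_exp2l // prime_gt1.
  exact: leq_trans h (leq_pmulr _ q20).
split => //; split => //.
set n := p1 ^ e1 * p2 ^ e2 in n1 *.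
have Pn : perm_eq (primes n) [:: p1; p2].
  apply: uniq_perm; first exact: primes_uniq.
    by rewrite /= inE hne.
  by move=> q; rewrite primesM // !primesX // !primes_prime // !inE.
have L1 : logn p1 n = e1.
  rewrite lognM // pfactorK // lognX logn_prime //.
  by rewrite (negbTE hne) muln0 addn0.
have L2 : logn p2 n = e2.
  rewrite lognM // pfactorK // lognX logn_prime //.
  by rewrite eq_sym (negbTE hne) muln0.
have H := key _ n1.
rewrite (perm_size Pn) (perm_big _ Pn) /= big_cons big_seq1 L1 L2 in H.
apply: (@expIn 2) => //; rewrite H -[RHS]expnM; congr (_ ^ _).
rewrite -hk' expnD -ha1 -ha2; lia.
Qed.


Lemma odd_prod (s : seq nat) (F : nat -> nat) :
  (forall i, odd (F i)) -> odd (\prod_(i <- s) F i).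
Proof.
move=> hF; elim: s => [|x s IH]; rewrite ?big_nil ?big_cons //.
by rewrite oddM hF IH.
Qed.

Lemma part3 k p (hk : 0 < k) (hp : prime p) :
  (forall n : nat, 1 < n -> KT0Tstar_perfect (p ^ k) n ->
     (exists p1, prime p1 /\ n = p1 ^ (2 * p ^ k - 1))
     \/
     (odd p /\ exists p1 p2 a1 a2 : nat,
        [/\ prime p1, prime p2, p1 != p2, 0 < a1 & 0 < a2] /\ a1 + a2 = k /\
        n = p1 ^ ((p ^ a1 - 1) %/ 2) * p2 ^ ((p ^ a2 - 1) %/ 2))).
Proof.
move=> n n1 [_ [_ HT]].
have n0 : 0 < n by apply: ltnW.
have H := key _ n1.
rewrite HT -expnM in H.
move/eqP: H; rewrite eqn_exp2l // => /eqP E.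
have nd := n_decomp _ n0.
have pu := primes_uniq n.
have mp : forall q, q \in primes n -> prime q /\ 0 < logn q n.
  by move=> q hq; rewrite logn_gt0 hq; move: hq; rewrite mem_primes => /andP[].
have hpd : pdiv n \in primes n by rewrite mem_primes pdiv_prime // n0 pdiv_dvd.
have p1 := prime_gt1 hp.
case eqs: (primes n) => [|q1 [|q2 [|q3 s]]] in E nd pu mp hpd *.
- by [].
- left; exists q1; have [hq1 l1] := mp q1 (mem_head _ _); split => //.
  rewrite /= big_cons big_nil expn0 !mul1n muln1 in E.
  rewrite nd big_cons big_nil muln1; congr (_ ^ _); lia.
- have [hq1 l1] := mp q1 (mem_head _ _).
  have [hq2 l2] : prime q2 /\ 0 < logn q2 n by apply: mp; rewrite !inE eqxx orbT.
  rewrite /= !big_cons big_nil expn1 muln1 in E.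
  set x1 := (2 * logn q1 n).+1 in E; set x2 := (2 * logn q2 n).+1 in E.
  have E' : p ^ k = x1 * x2 by lia.
  have [a1 ha1 ex1] : exists2 a1, a1 <= k & x1 = p ^ a1.
    by apply/(dvdn_pfactor _ _ hp); rewrite E' dvdn_mulr.
  have [a2 ha2 ex2] : exists2 a2, a2 <= k & x2 = p ^ a2.
    by apply/(dvdn_pfactor _ _ hp); rewrite E' dvdn_mull.
  have a10 : 0 < a1.
    case: a1 ex1 {ha1} => // /eqP; rewrite expn0 /x1 eqSS muln_eq0 /=; lia.
  have a20 : 0 < a2.
    case: a2 ex2 {ha2} => // /eqP; rewrite expn0 /x2 eqSS muln_eq0 /=; lia.
  have ox1 : odd x1 by rewrite /x1 /= oddM.
  right; split.
    by move: ox1; rewrite ex1 oddX; case: a1 a10 {ex1 ha1}.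
  exists q1, q2, a1, a2; split.
    split => //; by move: pu; rewrite /= inE andbT.
  split.
    by apply/eqP; rewrite -(eqn_exp2l _ _ p1) expnD -ex1 -ex2 -E'.
  rewrite nd !big_cons big_nil muln1 -ex1 -ex2 /x1 /x2 !subn1 /= !mulKn //.
- exfalso.
  have [hq1 l1] := mp q1 (mem_head _ _).
  rewrite /= in E.
  set c := 2 ^ (size s).+2 in E.
  set G := \prod_(q <- _) _ in E.
  have c4 : 4 %| c by rewrite /c (_ : 4 = 2 ^ 2) // dvdn_exp2l.
  have p2 : p = 2.
    have : 2 * 2 %| p ^ k * 2 by rewrite E dvdn_mulr.
    rewrite dvdn_pmul2r // Euclid_dvdX // hk andbT.
    by rewrite dvdn_prime2 // => /eqP.
  have oG : odd G by apply: odd_prod => i; rewrite /= oddM /c oddX.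
  subst p; have : G %| 2 ^ k.+1 by rewrite expnSr E dvdn_mull.
  move/(dvdn_pfactor _ _ (isT : prime 2)) => [j _ ej].
  have G1 : G = 1.
    by move: oG; rewrite ej oddX; case: j {ej} => // j; rewrite orbF.
  move: G1; rewrite /G big_cons => /eqP; rewrite muln_eq1 => /andP[/eqP h _].
  move: h; rewrite /c => /eqP; rewrite eqSS muln_eq0 expn_eq0 /=; lia.
Qed.

Theorem mainTheorem8 (k p : nat) (hk : 0 < k) (hp : prime p) :
  (forall p1 : nat, prime p1 ->
     KT0Tstar_perfect (p ^ k) (p1 ^ (2 * p ^ k - 1)))
  /\
  (2 <= k -> odd p ->
   forall p1 p2 a1 a2 : nat, prime p1 -> prime p2 -> p1 != p2 ->
     0 < a1 -> 0 < a2 -> a1 + a2 = k ->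
     KT0Tstar_perfect (p ^ k)
       (p1 ^ ((p ^ a1 - 1) %/ 2) * p2 ^ ((p ^ a2 - 1) %/ 2)))
  /\
  (forall n : nat, 1 < n -> KT0Tstar_perfect (p ^ k) n ->
     (exists p1, prime p1 /\ n = p1 ^ (2 * p ^ k - 1))
     \/
     (odd p /\ exists p1 p2 a1 a2 : nat,
        [/\ prime p1, prime p2, p1 != p2, 0 < a1 & 0 < a2] /\ a1 + a2 = k /\
        n = p1 ^ ((p ^ a1 - 1) %/ 2) * p2 ^ ((p ^ a2 - 1) %/ 2))).
Proof.
split; first exact: part1.
split; first by move=> _ op; exact: part2.
exact: part3.
Qed.
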